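(* Let $\beta>0$ be fixed. For $0<a<s$ define the (extended) Erlang C function $$C(s,a)=\left(\int_0^\infty (1+t)^s\,\frac{a t}{1+t}\,e^{-a t}\,dt\right)^{-1},$$ and let $C_*(\beta)=\left(1+\beta\,\frac{\Phi(\beta)}{\phi(\beta)}\right)^{-1}$, where $\Phi$ and $\phi$ are the distribution function and density of a standard normal random variable. Then the function $a\mapsto C(a+\beta\sqrt{a},a)$ is strictly decreasing on $(0,\infty)$. In particular, $C(a+\beta\sqrt{a},a)>C_*(\beta)$ for every $a>0$.
   Context: Note that $a<a+\beta\sqrt a$ for $a>0,\beta>0$, so $C(a+\beta\sqrt a,a)$ is well defined. It is a known result (Halfin–Whitt) that $\lim_{a\to\infty}C(a+\beta\sqrt{a},a)=C_*(\beta)$; this may be used. *)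

(* Defs.v *)
From Stdlib Require Import Reals Lra ClassicalEpsilon.
Open Scope R_scope.

Definition has_integral_0_infty (f : R -> R) (l : R) : Prop :=
  (forall b, 0 <= b -> inhabited (Riemann_integrable f 0 b)) /\
  (forall eps, 0 < eps -> exists M, forall b (pr : Riemann_integrable f 0 b),
      M <= b -> Rabs (RiemannInt pr - l) < eps).

Definition has_integral_minfty_to (f : R -> R) (x l : R) : Prop :=
  (forall c, c <= x -> inhabited (Riemann_integrable f c x)) /\
  (forall eps, 0 < eps -> exists M, forall c (pr : Riemann_integrable f c x),
      c <= M -> Rabs (RiemannInt pr - l) < eps).

(* The value of the improper integral (chosen classically; 0 if it does not exist). *)
Definition int_0_infty (f : R -> R) : R :=
  epsilon (inhabits 0) (fun l => has_integral_0_infty f l).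

Definition int_minfty_to (f : R -> R) (x : R) : R :=
  epsilon (inhabits 0) (fun l => has_integral_minfty_to f x l).

Definition ErlangC (s a : R) : R :=
  / int_0_infty (fun t => Rpower (1 + t) s * (a * t / (1 + t)) * exp (- (a * t))).

Definition std_normal_pdf (x : R) : R := exp (- (x ^ 2) / 2) / sqrt (2 * PI).
Definition std_normal_cdf (x : R) : R := int_minfty_to std_normal_pdf x.

Definition Cstar (beta : R) : R :=
  / (1 + beta * (std_normal_cdf beta / std_normal_pdf beta)).

(* Main.v *)
Require Import Defs.
From Stdlib Require Import Reals Lra ClassicalEpsilon.
From Coquelicot Require Import Coquelicot.
Open Scope R_scope.

Lemma psi_gt (y : R) : 0 < y -> y^2/2 < exp y - 1 - y.
Proof.
intros Hy.
destruct (MVT_cor2 (fun y => exp y - 1 - y - y^2/2) (fun y => exp y - 1 - y) 0 y Hy)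
  as [c [Hc1 Hc2]].
{ intros c _. apply is_derive_Reals. auto_derive; auto. field. }
rewrite exp_0 in Hc1.
assert (1 + c < exp c) by (apply exp_ineq1; lra).
assert (0 < (exp c - 1 - c) * (y - 0)) by (apply Rmult_lt_0_compat; lra).
lra.
Qed.

Lemma m_pos (y : R) : 0 < y -> 0 < (y-2)*exp y + y + 2.
Proof.
intros Hy.
assert (Hm' : forall c, 0 < c -> 0 < (c-1)*exp c + 1).
{ intros c Hc.
  destruct (MVT_cor2 (fun y => (y-1)*exp y + 1) (fun y => y * exp y) 0 c Hc)
    as [d [Hd1 Hd2]].
  { intros d _. apply is_derive_Reals. auto_derive; auto. ring. }
  rewrite exp_0 in Hd1.
  assert (0 < d * exp d * (c - 0)) by
    (apply Rmult_lt_0_compat; [apply Rmult_lt_0_compat; [lra|apply exp_pos]|lra]).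
  lra. }
destruct (MVT_cor2 (fun y => (y-2)*exp y + y + 2) (fun y => (y-1)*exp y + 1) 0 y Hy)
  as [c [Hc1 Hc2]].
{ intros c _. apply is_derive_Reals. auto_derive; auto. ring. }
rewrite exp_0 in Hc1.
assert (0 < ((c-1)*exp c + 1) * (y - 0)) by (apply Rmult_lt_0_compat; [apply Hm'; lra|lra]).
lra.
Qed.

Lemma g_decr (z n1 n2 : R) : 0 < z -> 0 < n1 -> n1 < n2 ->
  n2^2*(exp(z/n2)-1-z/n2) < n1^2*(exp(z/n1)-1-z/n1).
Proof.
intros Hz H1 H12.
destruct (MVT_cor2 (fun n => n^2*(exp(z/n)-1) - n*z)
   (fun c => 2*c*(exp(z/c)-1) - z*exp(z/c) - z) n1 n2 H12) as [c [Hc1 Hc2]].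
{ intros c Hc. apply is_derive_Reals. auto_derive. lra. unfold Rdiv; field; lra. }
assert (Hm : 0 < (z/c-2)*exp (z/c) + z/c + 2) by (apply m_pos; apply Rdiv_lt_0_compat; lra).
assert (E : 2*c*(exp(z/c)-1) - z*exp(z/c) - z = - (c * ((z/c-2)*exp (z/c) + z/c + 2))) by (field; lra).
rewrite E in Hc1.
assert (0 < c * ((z/c-2)*exp (z/c) + z/c + 2) * (n2 - n1)) by
  (apply Rmult_lt_0_compat; [apply Rmult_lt_0_compat; lra|lra]).
assert (E1 : n1^2*(exp(z/n1)-1-z/n1) = n1^2*(exp(z/n1)-1) - n1*z) by (field; lra).
assert (E2 : n2^2*(exp(z/n2)-1-z/n2) = n2^2*(exp(z/n2)-1) - n2*z) by (field; lra).
rewrite E1, E2. lra.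
Qed.

Lemma hi0_unique f l1 l2 : has_integral_0_infty f l1 -> has_integral_0_infty f l2 -> l1 = l2.
Proof.
intros [Hi H1] [_ H2].
apply Rle_antisym; apply Rnot_lt_le; intro Hlt.
- set (e := (l1 - l2)/2).
  destruct (H1 e ltac:(unfold e; lra)) as [M1 HM1].
  destruct (H2 e ltac:(unfold e; lra)) as [M2 HM2].
  set (b := Rmax 0 (Rmax M1 M2)).
  assert (Hb0 : 0 <= b) by apply Rmax_l.
  destruct (Hi b Hb0) as [pr].
  specialize (HM1 b pr). specialize (HM2 b pr).
  assert (M1 <= b) by (unfold b; eapply Rle_trans; [apply Rmax_l|apply Rmax_r]).
  assert (M2 <= b) by (unfold b; eapply Rle_trans; [apply Rmax_r|apply Rmax_r]).
  specialize (HM1 H). specialize (HM2 H0).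
  apply Rabs_def2 in HM1. apply Rabs_def2 in HM2. unfold e in *. lra.
- set (e := (l2 - l1)/2).
  destruct (H1 e ltac:(unfold e; lra)) as [M1 HM1].
  destruct (H2 e ltac:(unfold e; lra)) as [M2 HM2].
  set (b := Rmax 0 (Rmax M1 M2)).
  assert (Hb0 : 0 <= b) by apply Rmax_l.
  destruct (Hi b Hb0) as [pr].
  specialize (HM1 b pr). specialize (HM2 b pr).
  assert (M1 <= b) by (unfold b; eapply Rle_trans; [apply Rmax_l|apply Rmax_r]).
  assert (M2 <= b) by (unfold b; eapply Rle_trans; [apply Rmax_r|apply Rmax_r]).
  specialize (HM1 H). specialize (HM2 H0).
  apply Rabs_def2 in HM1. apply Rabs_def2 in HM2. unfold e in *. lra.
Qed.

Lemma int0_val f l : has_integral_0_infty f l -> int_0_infty f = l.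
Proof.
intros H. unfold int_0_infty.
apply hi0_unique with f; [|exact H].
apply epsilon_spec. exists l; exact H.
Qed.

Lemma him_unique f x l1 l2 : has_integral_minfty_to f x l1 -> has_integral_minfty_to f x l2 -> l1 = l2.
Proof.
intros [Hi H1] [_ H2].
apply Rle_antisym; apply Rnot_lt_le; intro Hlt.
- set (e := (l1 - l2)/2).
  destruct (H1 e ltac:(unfold e; lra)) as [M1 HM1].
  destruct (H2 e ltac:(unfold e; lra)) as [M2 HM2].
  set (b := Rmin x (Rmin M1 M2)).
  assert (Hb0 : b <= x) by apply Rmin_l.
  destruct (Hi b Hb0) as [pr].
  specialize (HM1 b pr). specialize (HM2 b pr).
  assert (b <= M1) by (unfold b; eapply Rle_trans; [apply Rmin_r|apply Rmin_l]).
  assert (b <= M2) by (unfold b; eapply Rle_trans; [apply Rmin_r|apply Rmin_r]).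
  specialize (HM1 H). specialize (HM2 H0).
  apply Rabs_def2 in HM1. apply Rabs_def2 in HM2. unfold e in *. lra.
- set (e := (l2 - l1)/2).
  destruct (H1 e ltac:(unfold e; lra)) as [M1 HM1].
  destruct (H2 e ltac:(unfold e; lra)) as [M2 HM2].
  set (b := Rmin x (Rmin M1 M2)).
  assert (Hb0 : b <= x) by apply Rmin_l.
  destruct (Hi b Hb0) as [pr].
  specialize (HM1 b pr). specialize (HM2 b pr).
  assert (b <= M1) by (unfold b; eapply Rle_trans; [apply Rmin_r|apply Rmin_l]).
  assert (b <= M2) by (unfold b; eapply Rle_trans; [apply Rmin_r|apply Rmin_r]).
  specialize (HM1 H). specialize (HM2 H0).
  apply Rabs_def2 in HM1. apply Rabs_def2 in HM2. unfold e in *. lra.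
Qed.

Lemma intm_val f x l : has_integral_minfty_to f x l -> int_minfty_to f x = l.
Proof.
intros H. unfold int_minfty_to.
apply him_unique with f x; [|exact H].
apply epsilon_spec. exists l; exact H.
Qed.

Definition islim (q : R -> R) (L : R) :=
  (forall Z, 0 <= Z -> RInt q 0 Z <= L) /\
  (forall eps, 0 < eps -> exists M, 0 <= M /\ forall Z, M <= Z -> L - eps < RInt q 0 Z).

Lemma RInt_mono (q : R -> R) Z1 Z2 : (forall z, continuous q z) -> (forall z, 0 <= z -> 0 <= q z) ->
  0 <= Z1 <= Z2 -> RInt q 0 Z1 <= RInt q 0 Z2.
Proof.
intros Hc Hp HZ.
assert (Hex : forall a b, ex_RInt q a b) by (intros; apply (ex_RInt_continuous (V:=R_CompleteNormedModule)); auto).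
rewrite <- (RInt_Chasles q 0 Z1 Z2) by auto.
change (plus (RInt q 0 Z1) (RInt q Z1 Z2)) with (RInt q 0 Z1 + RInt q Z1 Z2).
assert (0 <= RInt q Z1 Z2); [|lra].
apply RInt_ge_0; auto; try lra. intros; apply Hp; lra.
Qed.

Lemma RInt_exp_bound K Z : 0 <= Z -> RInt (fun z => K * exp (-z)) 0 Z = K - K * exp (-Z).
Proof.
intros HZ.
apply is_RInt_unique.
assert (E : K - K * exp (-Z) = minus ((fun z => - K * exp (-z)) Z) ((fun z => - K * exp (-z)) 0)).
{ simpl. rewrite Ropp_0, exp_0. change (minus ?a ?b) with (a - b). ring. }
rewrite E. apply (is_RInt_derive (fun z => - K * exp (-z))).
- intros x _. auto_derive; auto. ring.
- intros x _. apply (ex_derive_continuous (fun z => K * exp (-z))). auto_derive; auto.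
Qed.

Lemma exists_lim (q : R -> R) K : (forall z, continuous q z) ->
  (forall z, 0 <= z -> 0 <= q z <= K * exp (-z)) -> exists L, islim q L.
Proof.
intros Hc Hb.
assert (Hex : forall a b, ex_RInt q a b) by (intros; apply (ex_RInt_continuous (V:=R_CompleteNormedModule)); auto).
assert (HK : 0 <= K).
{ destruct (Hb 0 (Rle_refl 0)) as [H0 H]. rewrite Ropp_0, exp_0 in H. lra. }
set (E := fun x => exists Z, 0 <= Z /\ x = RInt q 0 Z).
assert (Hbd : bound E).
{ exists K. intros x [Z [HZ ->]].
  eapply Rle_trans.
  { apply (RInt_le q (fun z => K * exp (-z))); auto.
    apply (ex_RInt_continuous (V:=R_CompleteNormedModule)). intros. apply (ex_derive_continuous (fun z => K * exp (-z))). auto_derive; auto.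
    intros. apply Hb; lra. }
  rewrite RInt_exp_bound by auto.
  assert (0 <= K * exp (-Z)) by (apply Rmult_le_pos; [lra| left; apply exp_pos]). lra. }
destruct (completeness E Hbd) as [L [HL1 HL2]].
{ exists (RInt q 0 0). exists 0. split; auto; lra. }
exists L. split.
- intros Z HZ. apply HL1. exists Z; auto.
- intros eps Heps.
  destruct (Classical_Prop.classic (exists Z, 0 <= Z /\ L - eps < RInt q 0 Z)) as [[Z [HZ HZ']]|Hn].
  + exists Z. split; auto. intros Z' HZ'2.
    eapply Rlt_le_trans; [exact HZ'|]. apply RInt_mono; auto. intros; apply Hb; auto.
  + exfalso. assert (L <= L - eps); [|lra].
    apply HL2. intros x [Z [HZ ->]]. apply Rnot_lt_le. intro. apply Hn. exists Z; auto.
Qed.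

Lemma lim_compare (q1 q2 : R -> R) L1 L2 : (forall z, continuous q1 z) -> (forall z, continuous q2 z) ->
  (forall z, 0 < z -> q1 z < q2 z) -> islim q1 L1 -> islim q2 L2 -> L1 < L2.
Proof.
intros Hc1 Hc2 Hlt [A1 B1] [A2 B2].
assert (Hex1 : forall a b, ex_RInt q1 a b) by (intros; apply (ex_RInt_continuous (V:=R_CompleteNormedModule)); auto).
assert (Hex2 : forall a b, ex_RInt q2 a b) by (intros; apply (ex_RInt_continuous (V:=R_CompleteNormedModule)); auto).
set (d := RInt q2 0 1 - RInt q1 0 1).
assert (Hd : 0 < d).
{ unfold d. assert (RInt q1 0 1 < RInt q2 0 1); [|lra].
  apply RInt_lt; auto; try lra. intros; apply Hlt; lra. }
assert (HZ : forall Z, 1 <= Z -> RInt q1 0 Z + d <= RInt q2 0 Z).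
{ intros Z HZ. unfold d.
  rewrite <- (RInt_Chasles q1 0 1 Z) by auto.
  rewrite <- (RInt_Chasles q2 0 1 Z) by auto.
  change (plus ?a ?b) with (a + b).
  assert (RInt q1 1 Z <= RInt q2 1 Z); [|lra].
  apply RInt_le; auto. intros; left; apply Hlt; lra. }
destruct (B1 (d/2) ltac:(lra)) as [M [HM HM']].
set (Z := Rmax M 1).
assert (M <= Z) by apply Rmax_l. assert (1 <= Z) by apply Rmax_r.
specialize (HM' Z H). specialize (HZ Z H0). specialize (A2 Z ltac:(lra)). lra.
Qed.

Definition qf (beta n z : R) : R := exp (beta*z - n^2*(exp(z/n)-1-z/n)).
Definition qi (beta z : R) : R := exp (beta*z - z^2/2).

Lemma exp_le' x y : x <= y -> exp x <= exp y.
Proof. intros [H|H]. left; apply exp_increasing; auto. subst; lra. Qed.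

Lemma qf_cont beta n (z : R) : n <> 0 -> continuous (qf beta n) z.
Proof. intros Hn. apply (ex_derive_continuous (qf beta n)). unfold qf. auto_derive; auto. Qed.

Lemma qi_cont beta (z : R) : continuous (qi beta) z.
Proof. apply (ex_derive_continuous (qi beta)). unfold qi. auto_derive; auto. Qed.

Lemma qf_lt_qi beta n z : 0 < n -> 0 < z -> qf beta n z < qi beta z.
Proof.
intros Hn Hz. unfold qf, qi. apply exp_increasing.
assert (H := psi_gt (z/n) ltac:(apply Rdiv_lt_0_compat; lra)).
assert (Hn2 : 0 < n^2) by (apply pow_lt; lra).
assert (n^2 * ((z/n)^2/2) < n^2*(exp(z/n)-1-z/n)) by (apply Rmult_lt_compat_l; auto).
assert (E : n^2 * ((z/n)^2/2) = z^2/2) by (field; lra).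
lra.
Qed.

Lemma qf_le_qi beta n z : 0 < n -> 0 <= z -> qf beta n z <= qi beta z.
Proof.
intros Hn [Hz|Hz]. left; apply qf_lt_qi; auto.
subst. unfold qf, qi. right. f_equal. unfold Rdiv. rewrite Rmult_0_l, exp_0. ring.
Qed.

Lemma qi_bound beta z : 0 <= qi beta z <= exp ((beta+1)^2/2) * exp (-z).
Proof.
unfold qi. split. left; apply exp_pos.
rewrite <- exp_plus. apply exp_le'.
assert (0 <= (z - (beta+1))^2) by (apply pow2_ge_0). lra.
Qed.

Lemma qf_incr beta n1 n2 z : 0 < n1 -> n1 < n2 -> 0 < z -> qf beta n1 z < qf beta n2 z.
Proof.
intros H1 H12 Hz. unfold qf. apply exp_increasing.
assert (H := g_decr z n1 n2 Hz H1 H12). lra.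
Qed.

Lemma qf_bound beta n z : 0 < n -> 0 <= z -> 0 <= qf beta n z <= exp ((beta+1)^2/2) * exp (-z).
Proof.
intros Hn Hz. split. left; apply exp_pos.
eapply Rle_trans; [apply qf_le_qi; auto|apply qi_bound].
Qed.

Lemma dRInt (q : R -> R) y : (forall z, continuous q z) -> is_derive (RInt q 0) y (q y).
Proof.
intros Hc. apply (is_derive_RInt q (RInt q 0) 0 y); auto.
apply filter_forall. intros b0. apply (RInt_correct (V:=R_CompleteNormedModule)).
apply (ex_RInt_continuous (V:=R_CompleteNormedModule)); auto.
Qed.

Lemma alg_id (n beta x E F : R) : 1 + x <> 0 ->
  -((n^2+beta*n)/(1+x)*E*F - n^2*E*F) + beta*(n/(1+x)*(E*F)) = E*(n^2*x/(1+x))*F.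
Proof. intros. field. auto. Qed.

Lemma erl_int beta a n b : 0 < n -> a = n^2 -> 0 <= b ->
  is_RInt (fun t => Rpower (1 + t) (a + beta*n) * (a * t / (1 + t)) * exp (- (a * t))) 0 b
   (1 - exp((a+beta*n)*ln(1+b))*exp(-(a*b)) + beta * RInt (qf beta n) 0 (n*ln(1+b))).
Proof.
intros Hn Ha Hb.
set (s := a + beta*n).
set (F := fun x => -(exp(s*ln(1+x))*exp(-(a*x))) + beta*RInt (qf beta n) 0 (n*ln(1+x))).
assert (Hq : forall z, continuous (qf beta n) z) by (intros; apply qf_cont; lra).
assert (E : 1 - exp(s*ln(1+b))*exp(-(a*b)) + beta * RInt (qf beta n) 0 (n*ln(1+b)) = minus (F b) (F 0)).
{ unfold F; cbv beta. rewrite Rplus_0_r, ln_1, !Rmult_0_r, RInt_point, Ropp_0, exp_0.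
  change (minus ?x ?y) with (x - y). change (zero : R) with 0. ring. }
rewrite E. clear E.
apply (is_RInt_derive F).
- intros x Hx. rewrite Rmin_left in Hx by lra. rewrite Rmax_right in Hx by lra.
  assert (H1 : is_derive (fun x => RInt (qf beta n) 0 (n*ln(1+x))) x
                 (n / (1+x) * qf beta n (n*ln(1+x)))).
  { apply (is_derive_comp (RInt (qf beta n)  0) (fun x => n*ln(1+x))).
    apply dRInt; auto. auto_derive. lra. field. lra. }
  assert (H2 : is_derive (fun x => -(exp(s*ln(1+x))*exp(-(a*x)))) x
     (-(s / (1+x) * exp(s*ln(1+x)) * exp(-(a*x)) - a * exp(s*ln(1+x))*exp(-(a*x))))).
  { auto_derive. lra. field. lra. }
  assert (H3 := is_derive_plus _ _ x _ _ H2 (is_derive_scal _ x beta _ H1)).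
  unfold F. 
  match goal with |- is_derive _ _ ?v => replace v with (plus (-(s / (1+x) * exp(s*ln(1+x)) * exp(-(a*x)) - a * exp(s*ln(1+x))*exp(-(a*x)))) (beta * (n / (1 + x) * qf beta n (n * ln (1 + x))))) end.
  exact H3.
  change (plus ?u ?v) with (u + v).
  unfold qf, Rpower.
  replace (n * ln (1 + x) / n) with (ln (1+x)) by (field; lra).
  rewrite exp_ln by lra.
  replace (beta * (n * ln (1 + x)) - n ^ 2 * (1 + x - 1 - ln (1 + x))) with (s * ln (1+x) + - (a*x)) by (unfold s; rewrite Ha; ring).
  rewrite exp_plus. unfold s. rewrite Ha. apply alg_id. lra.
- intros x Hx. rewrite Rmin_left in Hx by lra. rewrite Rmax_right in Hx by lra.
  apply (ex_derive_continuous (fun t => Rpower (1 + t) (a + beta*n) * (a * t / (1 + t)) * exp (- (a * t)))).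
  unfold Rpower. auto_derive. repeat split; auto; lra.
Qed.

Lemma T_eq beta n b : 0 < n -> 0 <= b ->
  exp((n^2+beta*n)*ln(1+b))*exp(-(n^2*b)) = qf beta n (n*ln(1+b)).
Proof.
intros Hn Hb. unfold qf.
replace (n * ln (1 + b) / n) with (ln (1+b)) by (field; lra).
rewrite exp_ln by lra. rewrite <- exp_plus. f_equal. ring.
Qed.

Lemma erlang_val beta a n L : 0 < n -> a = n^2 -> islim (qf beta n) L ->
  ErlangC (a + beta*n) a = / (1 + beta*L).
Proof.
intros Hn Ha [HL1 HL2].
unfold ErlangC. f_equal. apply int0_val. split.
- intros b Hb. constructor. apply ex_RInt_Reals_0. eexists. apply erl_int; eauto.
- intros eps Heps.
  set (K := exp ((beta+1)^2/2)).
  assert (HK : 0 < K) by apply exp_pos.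
  set (e1 := eps / (2*(Rabs beta + 1))).
  assert (He1 : 0 < e1) by (unfold e1; apply Rdiv_lt_0_compat; [lra|]; assert (0 <= Rabs beta) by apply Rabs_pos; lra).
  destruct (HL2 e1 He1) as [M1 [HM1 HM1']].
  set (M2 := ln (2*K/eps + 1)).
  set (MZ := Rmax M1 (Rmax M2 0)).
  exists (exp (MZ/n)). intros b pr Hb.
  assert (Hb0 : 0 <= b) by (assert (0 < exp (MZ/n)) by apply exp_pos; lra).
  rewrite <- (RInt_Reals _ _ _ pr).
  rewrite (is_RInt_unique _ _ _ _ (erl_int beta a n b Hn Ha Hb0)).
  set (Z := n * ln (1+b)).
  assert (HZ : MZ <= Z).
  { unfold Z. assert (MZ/n <= ln (1+b)).
    { rewrite <- (ln_exp (MZ/n)). left. apply ln_increasing. apply exp_pos. lra. }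
    apply Rmult_le_compat_l with (r := n) in H; [|lra].
    replace (n * (MZ/n)) with MZ in H by (field; lra). lra. }
  assert (HMZ1 : M1 <= MZ) by apply Rmax_l.
  assert (HMZ2 : M2 <= MZ) by (unfold MZ; eapply Rle_trans; [apply Rmax_l|apply Rmax_r]).
  assert (HMZ3 : 0 <= MZ) by (unfold MZ; eapply Rle_trans; [apply Rmax_r|apply Rmax_r]).
  specialize (HM1' Z ltac:(lra)). specialize (HL1 Z ltac:(lra)).
  rewrite Ha. rewrite T_eq by auto. fold Z.
  assert (HT : qf beta n Z < eps/2).
  { destruct (qf_bound beta n Z Hn ltac:(lra)) as [_ Hq]. fold K in Hq.
    eapply Rle_lt_trans; [exact Hq|].
    assert (exp M2 <= exp Z) by (apply exp_le'; lra).
    unfold M2 in H. rewrite exp_ln in H.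
    2:{ assert (0 <= 2*K/eps) by (apply Rmult_le_pos; [lra|left; apply Rinv_0_lt_compat; lra]). lra. }
    rewrite exp_Ropp.
    apply (Rmult_lt_reg_r (exp Z)); [apply exp_pos|].
    rewrite Rmult_assoc, Rinv_l by (apply Rgt_not_eq, exp_pos).
    replace (2*K/eps) with (K / (eps/2)) in H by (field; lra).
    apply (Rmult_le_compat_l (eps/2)) in H; [|lra].
    replace (eps/2 * (K/(eps/2) + 1)) with (K + eps/2) in H by (field; lra). lra. }
  assert (HTp : 0 <= qf beta n Z) by (left; apply exp_pos).
  assert (Hb1 : Rabs (beta * (RInt (qf beta n) 0 Z - L)) <= Rabs beta * e1).
  { rewrite Rabs_mult. apply Rmult_le_compat_l. apply Rabs_pos.
    rewrite Rabs_left1 by lra. lra. }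
  assert (Hb2 : Rabs beta * e1 <= eps/2).
  { unfold e1. assert (0 <= Rabs beta) by apply Rabs_pos.
    apply (Rmult_le_reg_r (2*(Rabs beta + 1))); [lra|].
    replace (Rabs beta * (eps / (2 * (Rabs beta + 1))) * (2 * (Rabs beta + 1))) with (Rabs beta * eps) by (field; lra).
    nra. }
  replace (1 - qf beta n Z + beta * RInt (qf beta n) 0 Z - (1 + beta * L))
    with (- qf beta n Z + beta * (RInt (qf beta n) 0 Z - L)) by ring.
  eapply Rle_lt_trans; [apply Rabs_triang|].
  rewrite Rabs_Ropp, Rabs_right by lra. lra.
Qed.

Lemma pdf_eq beta x : std_normal_pdf beta * qi beta (beta - x) = std_normal_pdf x.
Proof.
unfold std_normal_pdf, qi.
replace (exp (- x^2/2)) with (exp(-(beta^2)/2) * exp(beta*(beta-x) - (beta-x)^2/2))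
  by (rewrite <- exp_plus; f_equal; field). field. apply Rgt_not_eq, sqrt_lt_R0. assert (0 < PI) by apply PI_RGT_0. lra.
Qed.

Lemma pdf_pos x : 0 < std_normal_pdf x.
Proof.
unfold std_normal_pdf. apply Rdiv_lt_0_compat. apply exp_pos.
apply sqrt_lt_R0. assert (0 < PI) by apply PI_RGT_0. lra.
Qed.

Lemma normal_int beta c : c <= beta ->
  is_RInt std_normal_pdf c beta (std_normal_pdf beta * RInt (qi beta) 0 (beta - c)).
Proof.
intros Hc.
set (G := fun x => - std_normal_pdf beta * RInt (qi beta) 0 (beta - x)).
assert (E : std_normal_pdf beta * RInt (qi beta) 0 (beta - c) = minus (G beta) (G c)).
{ unfold G; cbv beta. rewrite Rminus_diag, RInt_point.
  change (minus ?x ?y) with (x - y). change (zero : R) with 0. ring. }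
rewrite E.
apply (is_RInt_derive G).
- intros x _.
  assert (H1 : is_derive (fun x => RInt (qi beta) 0 (beta - x)) x (-1 * qi beta (beta - x))).
  { apply (is_derive_comp (RInt (qi beta) 0) (fun x => beta - x)).
    apply dRInt; intros; apply qi_cont. auto_derive; auto; ring. }
  assert (H3 := is_derive_scal _ x (- std_normal_pdf beta) _ H1).
  unfold G. rewrite <- (pdf_eq beta x).
  match goal with |- is_derive _ _ ?v => replace v with (- std_normal_pdf beta * (-1 * qi beta (beta - x))) end.
  exact H3. ring.
- intros x _. apply (ex_derive_continuous std_normal_pdf). unfold std_normal_pdf. auto_derive; auto.
Qed.

Lemma cdf_val beta L : islim (qi beta) L -> std_normal_cdf beta = std_normal_pdf beta * L.
Proof.
intros [HL1 HL2]. unfold std_normal_cdf. apply intm_val. split.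
- intros c Hc. constructor. apply ex_RInt_Reals_0. eexists. apply normal_int; eauto.
- intros eps Heps.
  set (p := std_normal_pdf beta). assert (Hp : 0 < p) by apply pdf_pos.
  destruct (HL2 (eps/p) ltac:(apply Rdiv_lt_0_compat; lra)) as [M1 [HM1 HM1']].
  exists (beta - M1). intros c pr Hc.
  rewrite <- (RInt_Reals _ _ _ pr).
  rewrite (is_RInt_unique _ _ _ _ (normal_int beta c ltac:(lra))).
  fold p.
  specialize (HM1' (beta - c) ltac:(lra)). specialize (HL1 (beta - c) ltac:(lra)).
  rewrite <- Rmult_minus_distr_l, Rabs_mult, Rabs_right by lra.
  rewrite Rabs_left1 by lra.
  apply (Rmult_lt_compat_l p) in HM1'; [|lra].
  replace (p * (L - eps/p)) with (p*L - eps) in HM1' by (field; lra). nra.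
Qed.

Lemma L_nonneg q L : islim q L -> 0 <= L.
Proof. intros [H _]. specialize (H 0 (Rle_refl 0)). rewrite RInt_point in H. exact H. Qed.

Lemma lim_qf beta n : 0 < n -> exists L, islim (qf beta n) L.
Proof.
intros Hn. apply (exists_lim _ (exp ((beta+1)^2/2))).
intros; apply qf_cont; lra. intros; apply qf_bound; auto.
Qed.

Lemma erl_a beta a : 0 < a -> exists L, islim (qf beta (sqrt a)) L /\
  ErlangC (a + beta * sqrt a) a = / (1 + beta * L).
Proof.
intros Ha. assert (Hn : 0 < sqrt a) by (apply sqrt_lt_R0; auto).
destruct (lim_qf beta (sqrt a) Hn) as [L HL]. exists L. split; auto.
apply erlang_val; auto. rewrite pow2_sqrt; lra.
Qed.

Theorem mainTheorem1 (beta : R) (hbeta : 0 < beta) :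
  (forall a1 a2 : R, 0 < a1 -> a1 < a2 ->
     ErlangC (a2 + beta * sqrt a2) a2 < ErlangC (a1 + beta * sqrt a1) a1) /\
  (forall a : R, 0 < a -> Cstar beta < ErlangC (a + beta * sqrt a) a).
Proof.
split.
- intros a1 a2 H1 H12.
  destruct (erl_a beta a1 H1) as [L1 [HL1 E1]].
  destruct (erl_a beta a2 ltac:(lra)) as [L2 [HL2 E2]].
  rewrite E1, E2.
  assert (Hn1 : 0 < sqrt a1) by (apply sqrt_lt_R0; auto).
  assert (Hn12 : sqrt a1 < sqrt a2) by (apply sqrt_lt_1; lra).
  assert (HLt : L1 < L2).
  { apply (lim_compare (qf beta (sqrt a1)) (qf beta (sqrt a2))); auto.
    intros; apply qf_cont; lra. intros; apply qf_cont; lra.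
    intros; apply qf_incr; auto. }
  assert (0 <= L1) by (eapply L_nonneg; eauto).
  apply Rinv_lt_contravar. apply Rmult_lt_0_compat; nra. nra.
- intros a Ha.
  destruct (erl_a beta a Ha) as [L [HL E1]]. rewrite E1.
  destruct (exists_lim (qi beta) (exp ((beta+1)^2/2))) as [Li HLi].
  intros; apply qi_cont. intros; apply qi_bound.
  unfold Cstar. rewrite (cdf_val beta Li HLi).
  assert (Hp := pdf_pos beta).
  replace (std_normal_pdf beta * Li / std_normal_pdf beta) with Li by (field; lra).
  assert (Hn : 0 < sqrt a) by (apply sqrt_lt_R0; auto).
  assert (HLt : L < Li).
  { apply (lim_compare (qf beta (sqrt a)) (qi beta)); auto.
    intros; apply qf_cont; lra. intros; apply qi_cont.
    intros; apply qf_lt_qi; auto. }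
  assert (0 <= L) by (eapply L_nonneg; eauto).
  apply Rinv_lt_contravar. apply Rmult_lt_0_compat; nra. nra.
Qed.
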